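(* Let $R$ be any ring. Every family $(\varphi_n)$ of unsatisfiable CNF formulas (with polynomially many clauses in $n$) has a Hilbert-like family of IPS certificates $(C_n)$ in $\mathsf{VNP}^0_R$.
   Context: For a CNF $\varphi=\kappa_1\wedge\dots\wedge\kappa_m$ on $x_1,\dots,x_n$, clause $\kappa_i$ is translated into the polynomial $C_i(\vec x)$ equal to the product over its literals of $1-x_j$ for a positive literal $x_j$ and $x_j$ for a negative literal $\neg x_j$ (so a $0/1$ assignment satisfies $\kappa_i$ iff $C_i$ vanishes); the system also includes $x_j^2-x_j$. A Hilbert-like IPS certificate is a polynomial $\sum_i y_iG_i(\vec x)$ over $R$ in placeholder variables $y_i$ (one per equation) such that substituting the equations for the $y_i$ gives $1$. $\mathsf{VP}^0_R$: families of polynomials with polynomially many variables and polynomial degree computable by polynomial-size constant-free (constants $0,1,-1$ only) algebraic circuits over $R$; $\mathsf{VNP}^0_R$: families $g_n(\vec z)=\sum_{\vec e\in\{0,1\}^{\mathrm{poly}(n)}}f_n(\vec e,\vec z)$ with $(f_n)\in\mathsf{VP}^0_R$. *)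

(* Defs.v *)
From HB Require Import structures.
From mathcomp Require Import all_boot all_algebra.
From mathcomp Require Import mpoly.
Set Implicit Arguments. Unset Strict Implicit. Unset Printing Implicit Defensive.
Import GRing.Theory.
Local Open Scope ring_scope.

Definition poly_bounded (g : nat -> nat) : Prop :=
  exists c k : nat, forall n, (g n <= c * n ^ k + c)%N.

(* A circuit is a straight-line program: gate number j may only refer to the
   values of gates 0..j-1. Constants are restricted to 0, 1, -1. *)
Inductive gate : Type :=
  | GInput of nat
  | GZero | GOne | GMinusOne
  | GAdd of nat & nat
  | GMul of nat & nat.

Definition circuit := seq gate.

Section CircuitEval.
Variables (R : comNzRingType) (k : nat).

(* the input variable z_i of {mpoly R[k]} (0 if i is out of range) *)
Definition in_var (i : nat) : {mpoly R[k]} :=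
  if insub i is Some j then 'X_j else 0.

(* value of gate g given the values [vals] of the previous gates
   (a reference to a non-existing gate reads as 0) *)
Definition gate_val (vals : seq {mpoly R[k]}) (g : gate) : {mpoly R[k]} :=
  match g with
  | GInput i => in_var i
  | GZero => 0
  | GOne => 1
  | GMinusOne => -1
  | GAdd a b => vals`_a + vals`_b
  | GMul a b => vals`_a * vals`_b
  end.

Definition circuit_vals (c : circuit) : seq {mpoly R[k]} :=
  foldl (fun vals g => rcons vals (gate_val vals g)) [::] c.

Definition circuit_out (c : circuit) : {mpoly R[k]} := last 0 (circuit_vals c).

End CircuitEval.

Definition VP0 (R : comNzRingType) (v : nat -> nat)
    (f : forall n, {mpoly R[v n]}) : Prop :=
  [/\ poly_bounded v,
      poly_bounded (fun n => msize (f n))  (* msize = total degree + 1 *)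
    & exists c : nat -> circuit,
        poly_bounded (fun n => size (c n)) /\
        forall n, circuit_out R (v n) (c n) = f n].

Definition subst_bool (R : comNzRingType) (p v : nat) (e : {ffun 'I_p -> bool})
    (f : {mpoly R[p + v]}) : {mpoly R[v]} :=
  f \mPo [tuple match split i with
                | inl j => (e j)%:R
                | inr j => 'X_j
                end | i < p + v].

Definition VNP0 (R : comNzRingType) (v : nat -> nat)
    (g : forall n, {mpoly R[v n]}) : Prop :=
  exists (p : nat -> nat) (f : forall n, {mpoly R[p n + v n]}),
    [/\ poly_bounded p,
        @VP0 R (fun n => (p n + v n)%N) f
      & forall n, g n = \sum_(e : {ffun 'I_(p n) -> bool}) @subst_bool R (p n) (v n) e (f n)].

(* A literal over x_0..x_{n-1} is a pair (j, b): b = true is x_j, b = false is ~x_j.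
   A clause is a finite set of literals, a CNF is a list of clauses. *)
Definition literal (n : nat) := ('I_n * bool)%type.
Definition clause (n : nat) := {set literal n}.
Definition cnf (n : nat) := seq (clause n).

Definition sat_clause n (a : 'I_n -> bool) (k : clause n) : bool :=
  [exists l in k, a l.1 == l.2].
Definition sat_cnf n (a : 'I_n -> bool) (phi : cnf n) : bool :=
  all (sat_clause a) phi.
Definition unsat n (phi : cnf n) : Prop := forall a : 'I_n -> bool, ~~ sat_cnf a phi.

Definition clause_poly (R : comNzRingType) n (k : clause n) : {mpoly R[n]} :=
  \prod_(l in k) (if l.2 then 1 - 'X_l.1 else 'X_l.1).

Definition cnf_system (R : comNzRingType) n (phi : cnf n) (i : 'I_(size phi + n))
    : {mpoly R[n]} :=
  match split i with
  | inl k => @clause_poly R n (nth set0 phi k)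
  | inr j => 'X_j ^+ 2 - 'X_j
  end.

(* Polynomials in variables x_0..x_{n-1}, y_0..y_{s-1} live in {mpoly R[n + s]}:
   x_j is 'X_(lshift s j), y_i is 'X_(rshift n i). *)
Definition x_embed (R : comNzRingType) n s (G : {mpoly R[n]}) : {mpoly R[n + s]} :=
  G \mPo [tuple 'X_(lshift s j) | j < n].

Definition y_subst (R : comNzRingType) n s (F : 'I_s -> {mpoly R[n]})
    (C : {mpoly R[n + s]}) : {mpoly R[n]} :=
  C \mPo [tuple match split i with
                | inl j => 'X_j
                | inr j => F j
                end | i < n + s].

Definition hilbert_like_cert (R : comNzRingType) n (phi : cnf n)
    (C : {mpoly R[n + (size phi + n)]}) : Prop :=
  (exists G : 'I_(size phi + n) -> {mpoly R[n]},
      C = \sum_(i < size phi + n) 'X_(rshift n i) * @x_embed R n (size phi + n) (G i))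
  /\ @y_subst R n (size phi + n) (@cnf_system R n phi) C = 1.

(* Main.v *)
Require Import Defs.
From HB Require Import structures.
From mathcomp Require Import all_boot all_algebra.
From mathcomp Require Import mpoly.
From mathcomp Require Import zify ring.
Set Implicit Arguments. Unset Strict Implicit. Unset Printing Implicit Defensive.
Import GRing.Theory.

Section PB.
Local Open Scope nat_scope.

Lemma expn_mono x y k : x <= y -> x ^ k <= y ^ k.
Proof. by case: k => [|k] // H; rewrite leq_exp2r. Qed.

Lemma pbE g : poly_bounded g <-> exists c k, forall n, g n <= c * n.+1 ^ k.
Proof.
split.
- move=> [c [k H]]; exists (2 * c), k => n.
  have h1 : n ^ k <= n.+1 ^ k by apply: expn_mono.
  have h2 : 0 < n.+1 ^ k by rewrite expn_gt0.
  have := H n; nia.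
- move=> [c [k H]]; exists (c * 2 ^ k), k => n.
  have h : n.+1 ^ k <= 2 ^ k * n ^ k + 2 ^ k.
    case: n => [|n]; first by rewrite exp1n; have := expn_gt0 2 k; lia.
    rewrite -expnMn; have : n.+2 ^ k <= (2 * n.+1) ^ k by apply: expn_mono; lia.
    lia.
  have := H n; nia.
Qed.

Lemma pb_le g h : (forall n, g n <= h n) -> poly_bounded h -> poly_bounded g.
Proof. move=> H [c [k Hh]]; exists c, k => n; exact: leq_trans (H n) (Hh n). Qed.

Lemma pb_add g h : poly_bounded g -> poly_bounded h -> poly_bounded (fun n => g n + h n).
Proof.
move=> /pbE [c1 [k1 H1]] /pbE [c2 [k2 H2]]; apply/pbE; exists (c1 + c2), (k1 + k2) => n.
have a1 : n.+1 ^ k1 <= n.+1 ^ (k1 + k2) by apply: leq_pexp2l; lia.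
have a2 : n.+1 ^ k2 <= n.+1 ^ (k1 + k2) by apply: leq_pexp2l; lia.
have := H1 n; have := H2 n; nia.
Qed.

Lemma pb_mul g h : poly_bounded g -> poly_bounded h -> poly_bounded (fun n => g n * h n).
Proof.
move=> /pbE [c1 [k1 H1]] /pbE [c2 [k2 H2]]; apply/pbE; exists (c1 * c2), (k1 + k2) => n.
rewrite expnD; have := leq_mul (H1 n) (H2 n); lia.
Qed.

Lemma pb_const c : poly_bounded (fun _ => c).
Proof. by exists c, 0 => n; lia. Qed.

Lemma pb_id : poly_bounded id.
Proof. by exists 1, 1 => n; rewrite expn1; lia. Qed.

End PB.

Section RS.
Local Open Scope ring_scope.

Inductive fml : Type :=
  | FVar of nat | FZero | FOne | FMOne | FAdd of fml & fml | FMul of fml & fml.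

Fixpoint feval (A : comNzRingType) (env : nat -> A) (f : fml) : A :=
  match f with
  | FVar i => env i | FZero => 0 | FOne => 1 | FMOne => -1
  | FAdd a b => feval env a + feval env b
  | FMul a b => feval env a * feval env b
  end.

Fixpoint fsize (f : fml) : nat :=
  match f with
  | FAdd a b | FMul a b => (fsize a + fsize b).+1
  | _ => 1%N
  end.

Fixpoint compile (o : nat) (f : fml) : circuit :=
  match f with
  | FVar i => [:: GInput i] | FZero => [:: GZero] | FOne => [:: GOne]
  | FMOne => [:: GMinusOne]
  | FAdd a b => compile o a ++ compile (o + fsize a) b
                 ++ [:: GAdd (o + fsize a).-1 (o + fsize a + fsize b).-1]
  | FMul a b => compile o a ++ compile (o + fsize a) b
                 ++ [:: GMul (o + fsize a).-1 (o + fsize a + fsize b).-1]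
  end.

Lemma fsize_gt0 f : (0 < fsize f)%N. Proof. by case: f. Qed.

Lemma size_compile o f : size (compile o f) = fsize f.
Proof.
elim: f o => //= a IHa b IHb o; rewrite !size_cat IHa IHb /=; lia.
Qed.

Section Comp.
Variables (R : comNzRingType) (k : nat).
Let step := fun (vals : seq {mpoly R[k]}) g => rcons vals (gate_val vals g).

Lemma nth_catl (T : Type) (x0 : T) s t i : (i < size s)%N -> nth x0 (s ++ t) i = nth x0 s i.
Proof. by move=> H; rewrite nth_cat H. Qed.

Lemma compileP f o (vals : seq {mpoly R[k]}) : size vals = o ->
  exists ws, foldl step vals (compile o f) = vals ++ ws /\ size ws = fsize f /\
     nth 0 (vals ++ ws) (o + fsize f).-1 = feval (@in_var R k) f.
Proof.
elim: f o vals => [i|||| a IHa b IHb | a IHa b IHb] o vals Hs /=;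
  try (exists [:: gate_val vals (head GZero (compile o (FVar 0)))]; fail).
1-4: (rewrite /step -cats1; eexists; split; first reflexivity; split; first by [];
      by rewrite addn1 /= nth_cat Hs ltnn subnn).
all: have [wa [Ea [Sa Na]]] := IHa o vals Hs;
  have [wb [Eb [Sb Nb]]] := IHb (o + fsize a)%N (vals ++ wa) ltac:(by rewrite size_cat Hs Sa);
  rewrite !foldl_cat Ea Eb /= /step -cats1; eexists; (split; first by rewrite -!catA);
  (split; first by rewrite !size_cat Sa Sb /=; lia).
all: have Hsz : size (vals ++ wa ++ wb) = (o + fsize a + fsize b)%N by rewrite !size_cat Hs Sa Sb; lia.
all: rewrite (catA vals wa) (catA (vals ++ wa) wb) nth_cat -catA Hsz;
  have -> : ((o + (fsize a + fsize b).+1).-1 = o + fsize a + fsize b)%N by lia.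
all: rewrite ltnn subnn /=.
all: have Ha : (((o + fsize a).-1) < size (vals ++ wa))%N by (rewrite size_cat Hs Sa; have := fsize_gt0 a; lia).
all: rewrite catA (nth_catl _ _ Ha) Na -catA -Nb catA; do 2 f_equal.
Qed.

Lemma compile_out f : circuit_out R k (compile 0 f) = feval (@in_var R k) f.
Proof.
have [ws [E [S N]]] := compileP f (vals := [::]) erefl.
rewrite /circuit_out /circuit_vals -/step E /= -N /= -nth_last S.
by rewrite add0n.
Qed.
End Comp.


Lemma msize_feval (R : comNzRingType) k f :
  (msize (feval (@in_var R k) f) <= 2 * fsize f)%N.
Proof.
elim: f => [i|||| a IHa b IHb | a IHa b IHb] /=.
- rewrite /in_var; case: insubP => [j _ _|_]; last by rewrite msize0.
  by rewrite msizeX mdeg1.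
- by rewrite msize0.
- by rewrite msize1.
- by rewrite msizeN msize1.
- apply: leq_trans (msizeD_le _ _) _; rewrite geq_max; apply/andP; split; lia.
- apply: leq_trans (msizeM_le _ _) _; lia.
Qed.

Lemma feval_morph (A B : comNzRingType) (phi : {rmorphism A -> B}) env f :
  phi (feval env f) = feval (phi \o env) f.
Proof.
elim: f => [i|||| a IHa b IHb | a IHa b IHb] //=.
- exact: rmorph0.
- exact: rmorph1.
- exact: rmorphN1.
- by rewrite rmorphD IHa IHb.
- by rewrite rmorphM IHa IHb.
Qed.

Definition fSum (s : seq fml) := foldr FAdd FZero s.
Definition fProd (s : seq fml) := foldr FMul FOne s.

Lemma feval_fSum (A : comNzRingType) (env : nat -> A) s :
  feval env (fSum s) = \sum_(x <- s) feval env x.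
Proof. by elim: s => [|x s IH] /=; rewrite ?big_nil ?big_cons ?IH. Qed.

Lemma feval_fProd (A : comNzRingType) (env : nat -> A) s :
  feval env (fProd s) = \prod_(x <- s) feval env x.
Proof. by elim: s => [|x s IH] /=; rewrite ?big_nil ?big_cons ?IH. Qed.

Lemma fsize_fSum (s : seq fml) (B : nat) : all (fun x => fsize x <= B)%N s ->
  (fsize (fSum s) <= size s * B.+1 + 1)%N.
Proof.
elim: s => [|x s IH] //= /andP[h1 /IH h2].
lia.
Qed.

Lemma fsize_fProd (s : seq fml) (B : nat) : all (fun x => fsize x <= B)%N s ->
  (fsize (fProd s) <= size s * B.+1 + 1)%N.
Proof.
elim: s => [|x s IH] //= /andP[h1 /IH h2].
lia.
Qed.

Definition fom (x : fml) := FAdd FOne (FMul FMOne x).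
Lemma feval_fom (A : comNzRingType) (env : nat -> A) x :
  feval env (fom x) = 1 - feval env x.
Proof. by rewrite /= mulN1r. Qed.

Lemma big_iota0 (A : Type) (idx : A) (op : Monoid.law idx) k (F : nat -> A) :
  \big[op/idx]_(i <- iota 0 k) F i = \big[op/idx]_(i < k) F i.
Proof. by rewrite -(big_mkord xpredT) /index_iota subn0. Qed.

Section Constr.
Variables (n : nat) (phi : cnf n).
Let m := size phi.
Definition cl (k : nat) : clause n := nth set0 phi k.
Definition vset (k : nat) : {set 'I_n} := [set l.1 | l in cl k].

Definition flit (l : literal n) : fml := if l.2 then fom (FVar l.1) else FVar l.1.
Definition fcl k := fProd [seq flit l | l <- enum (cl k)].
Definition find (j : nat) := FAdd (FMul (FVar j) (FVar (n + j)))
   (FMul (fom (FVar j)) (fom (FVar (n + j)))).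
Definition frest k := fProd [seq (if j \in vset k then FOne else find j) | j <- enum 'I_n].
Definition fpre k := fProd [seq fom (fcl k') | k' <- iota 0 k].
Definition fterm k := FMul (FVar (n + n + k)) (FMul (FMul (fcl k) (fpre k)) (frest k)).
Definition ftop := fSum [seq fterm k | k <- iota 0 m].

Section Sem.
Variables (A : comNzRingType) (eE eX eY : nat -> A).
Definition Cl k := \prod_(l in cl k) (if l.2 then 1 - eE l.1 else eE l.1).
Definition Ind (j : nat) := eE j * eX j + (1 - eE j) * (1 - eX j).
Definition Rest k := \prod_(j < n) (if j \in vset k then 1 else Ind j).
Definition Pre (k : nat) := \prod_(k' < k) (1 - Cl k').
Definition Hk k := Cl k * Pre k * Rest k.
Definition Top := \sum_(k < m) eY k * Hk k.
End Sem.

Lemma feval_ftop (A : comNzRingType) (env : nat -> A) :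
  feval env ftop = Top env (fun j => env (n + j)) (fun k => env (n + n + k)).
Proof.
have Ecl k : feval env (fcl k) = Cl env k.
  rewrite /fcl feval_fProd big_map big_enum /Cl; apply: eq_bigr => l _.
  by rewrite /flit; case: l.2; rewrite ?feval_fom.
rewrite /ftop feval_fSum big_map big_iota0 /Top; apply: eq_bigr => k _.
rewrite /fterm /= Ecl /Hk; congr (_ * (_ * _ * _)).
- rewrite /fpre feval_fProd big_map big_iota0 /Pre; apply: eq_bigr => k' _.
  by rewrite feval_fom Ecl.
- rewrite /frest feval_fProd big_map big_enum /Rest; apply: eq_bigr => j _.
  by case: (j \in vset k) => //=; rewrite !mulN1r.
Qed.

Lemma Top_morph (A B : comNzRingType) (f : {rmorphism A -> B}) eE eX eY :
  f (Top eE eX eY) = Top (f \o eE) (f \o eX) (f \o eY).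
Proof.
have Ecl k : f (Cl eE k) = Cl (f \o eE) k.
  rewrite rmorph_prod; apply: eq_bigr => l _; case: l.2 => //=; by rewrite rmorphB rmorph1.
rewrite rmorph_sum; apply: eq_bigr => k _.
rewrite rmorphM /Hk !rmorphM Ecl; congr (_ * (_ * _ * _)).
- rewrite rmorph_prod; apply: eq_bigr => k' _; by rewrite rmorphB rmorph1 Ecl.
- rewrite rmorph_prod; apply: eq_bigr => j _; case: (_ \in _); first exact: rmorph1.
  by rewrite /Ind rmorphD !rmorphM !rmorphB !rmorph1.
Qed.

Lemma Top_ext (A : comNzRingType) (eE eX eY eE' eX' eY' : nat -> A) :
  (forall j : 'I_n, eE j = eE' j :> A) -> (forall j : 'I_n, eX j = eX' j) ->
  (forall k : 'I_m, eY k = eY' k) -> Top eE eX eY = Top eE' eX' eY'.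
Proof.
move=> HE HX HY.
have Ecl k : Cl eE k = Cl eE' k by apply: eq_bigr => l _; rewrite HE.
apply: eq_bigr => k _; rewrite HY /Hk Ecl; congr (_ * (_ * _ * _)).
- by apply: eq_bigr => k' _; rewrite Ecl.
- by apply: eq_bigr => j _; rewrite /Ind HE HX.
Qed.

Lemma Hk_morph (A B : comNzRingType) (f : {rmorphism A -> B}) eE eX k :
  f (Hk eE eX k) = Hk (f \o eE) (f \o eX) k.
Proof.
have Ecl k0 : f (Cl eE k0) = Cl (f \o eE) k0.
  rewrite rmorph_prod; apply: eq_bigr => l _; case: l.2 => //=; by rewrite rmorphB rmorph1.
rewrite /Hk !rmorphM Ecl; congr (_ * _ * _).
- rewrite rmorph_prod; apply: eq_bigr => k' _; by rewrite rmorphB rmorph1 Ecl.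
- rewrite rmorph_prod; apply: eq_bigr => j _; case: (_ \in _); first exact: rmorph1.
  by rewrite /Ind rmorphD !rmorphM !rmorphB !rmorph1.
Qed.

Lemma Hk_ext (A : comNzRingType) (eE eX eE' eX' : nat -> A) k :
  (forall j : 'I_n, eE j = eE' j :> A) -> (forall j : 'I_n, eX j = eX' j) ->
  Hk eE eX k = Hk eE' eX' k.
Proof.
move=> HE HX.
have Ecl k0 : Cl eE k0 = Cl eE' k0 by apply: eq_bigr => l _; rewrite HE.
rewrite /Hk Ecl; congr (_ * _ * _).
- by apply: eq_bigr => k' _; rewrite Ecl.
- by apply: eq_bigr => j _; rewrite /Ind HE HX.
Qed.
End Constr.

Lemma telescope (A : comNzRingType) (a : nat -> A) m :
  \sum_(k < m) a k * \prod_(k' < k) (1 - a k') = 1 - \prod_(k < m) (1 - a k).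
Proof.
elim: m => [|m IH]; first by rewrite !big_ord0 subrr.
by rewrite big_ord_recr /= IH big_ord_recr /=; ring.
Qed.

Definition ebool n (e : {ffun 'I_n -> bool}) (j : nat) : bool :=
  if insub j is Some j' then e j' else false.
Lemma ebool_ord n e (j : 'I_n) : ebool e j = e j.
Proof. by rewrite /ebool valK. Qed.

Lemma in_var_ord (R : comNzRingType) n (j : 'I_n) : in_var R n j = 'X_j.
Proof. by rewrite /in_var valK. Qed.

Section Math.
Variables (R : comNzRingType) (n : nat) (phi : cnf n).
Hypothesis Hunsat : unsat phi.
Let m := size phi.

Definition falsified (e : {ffun 'I_n -> bool}) k := [forall l in cl phi k, e l.1 != l.2].
Definition ind (e : {ffun 'I_n -> bool}) (j : 'I_n) : {mpoly R[n]} :=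
  if e j then 'X_j else 1 - 'X_j.

Section Fixe.
Variable e : {ffun 'I_n -> bool}.
Let eE := fun j : nat => ((ebool e j)%:R : {mpoly R[n]}).

Lemma Cl_bool k : Cl phi eE k = (falsified e k)%:R.
Proof.
rewrite /Cl; case H: (falsified e k); rewrite /falsified in H.
- move/forall_inP: H => H; apply: big1; last first => l /H; rewrite /eE ebool_ord; case: l => [j [] ] /=; case: (e j) => //= _.
  by rewrite subr0.
- move/negbT/forall_inPn: H => [l Hl /negPn/eqP El].
  rewrite (bigD1 l) //= /eE ebool_ord El; case: l.2 => /=; rewrite ?subrr ?mul0r //.
Qed.

Lemma clause_rest k : falsified e k ->
  clause_poly R (cl phi k) * Rest phi eE (in_var R n) k = \prod_j ind e j.
Proof.
move=> /forall_inP Hf.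
have inj : {in cl phi k &, injective (fun l : literal n => l.1)}.
  move=> [j1 b1] [j2 b2] /Hf /= H1 /Hf /= H2 /= E; subst j2.
  by move: H1 H2; case: b1; case: b2; case: (e j1).
have -> : clause_poly R (cl phi k) = \prod_(j in vset phi k) ind e j.
  rewrite /vset big_imset //= /clause_poly; apply: eq_big => [l //|[j b] /Hf /= H].
  by rewrite /ind; move: H; case: b; case: (e j).
rewrite [RHS](bigID (fun j => j \in vset phi k)) /=; congr (_ * _).
rewrite /Rest [RHS]big_mkcond /=; apply: eq_bigr => j _.
case: (j \in vset phi k) => //=.
by rewrite /Ind /eE /ind ebool_ord in_var_ord; case: (e j) => /=; rewrite ?subr0 ?subrr; ring.
Qed.

Lemma Top_bool : Top phi eE (in_var R n) (fun k => clause_poly R (cl phi k)) = \prod_j ind e j.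
Proof.
rewrite /Top.
transitivity (\sum_(k < m) Cl phi eE k * Pre phi eE k * \prod_j ind e j).
  apply: eq_bigr => k _; rewrite /Hk.
  have [Hf|Hf] := boolP (falsified e k).
  - by rewrite -(clause_rest Hf); ring.
  - by rewrite Cl_bool (negbTE Hf) !mul0r mulr0.
rewrite -big_distrl /= [X in X * _](telescope (fun k => Cl phi eE k)).
suff -> : \prod_(k < m) (1 - Cl phi eE k) = 0 by rewrite subr0 mul1r.
have := Hunsat e; rewrite /sat_cnf => /allPn [kap Hin Hns].
have hk : (index kap phi < m)%N by rewrite index_mem.
rewrite (bigD1 (Ordinal hk)) //= Cl_bool.
have -> : falsified e (index kap phi).
  by rewrite /falsified /cl nth_index // -negb_exists_in.
by rewrite subrr mul0r.
Qed.
End Fixe.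

Lemma sum_Top : \sum_(e : {ffun 'I_n -> bool})
   Top phi (fun j => ((ebool e j)%:R : {mpoly R[n]})) (in_var R n) (fun k => clause_poly R (cl phi k)) = 1.
Proof.
under eq_bigr => e _ do rewrite Top_bool.
rewrite /ind -(bigA_distr_bigA (fun j (b : bool) => if b then 'X_j else 1 - 'X_j)) /=.
by apply: big1 => j _; rewrite big_bool /= addrC subrK.
Qed.
End Math.

End RS.

Section SZ.
Local Open Scope nat_scope.

Section Size.
Variables (n : nat) (phi : cnf n).
Let m := size phi.

Lemma fsize_fcl k : fsize (fcl phi k) <= 12 * n + 1.
Proof.
have Hs : size (enum (cl phi k)) <= n * 2.
  by rewrite -cardE; apply: leq_trans (max_card _) _; rewrite card_prod card_ord card_bool.
apply: leq_trans (fsize_fProd (B := 5) _) _; last by rewrite size_map; move: Hs; set s := size _;  lia.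
by rewrite all_map; apply/allP => l _ /=; rewrite /flit; case: l.2.
Qed.

Lemma fsize_fpre k : k <= m -> fsize (fpre phi k) <= m * (12 * n + 6) + 1.
Proof.
move=> Hk; apply: leq_trans (fsize_fProd (B := 12 * n + 5) _) _.
  by rewrite all_map; apply/allP => k' _ /=; have := fsize_fcl k'; lia.
rewrite size_map size_iota; nia.
Qed.

Lemma fsize_frest k : fsize (frest phi k) <= 16 * n + 1.
Proof.
apply: leq_trans (fsize_fProd (B := 15) _) _.
  by rewrite all_map; apply/allP => j _ /=; case: (_ \in _).
rewrite size_map size_enum_ord; nia.
Qed.

Lemma fsize_ftop : fsize (ftop phi) <= m.+1 * m.+1 * (40 * n + 40).
Proof.
apply: leq_trans (fsize_fSum (B := m * (12 * n + 6) + 28 * n + 7) _) _.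
  rewrite all_map; apply/allP => k; rewrite mem_iota add0n => /andP [_ Hk] /=.
  have := fsize_fcl k; have := fsize_fpre (ltnW Hk); have := fsize_frest k; lia.
rewrite size_map size_iota; nia.
Qed.
End Size.

End SZ.

Section RS2.
Local Open Scope ring_scope.

Lemma in_var_mPo (R : comNzRingType) k k' (t : k.-tuple {mpoly R[k']}) i (Hi : (i < k)%N) :
  in_var R k i \mPo t = tnth t (Ordinal Hi).
Proof. by rewrite /in_var insubT /= comp_mpolyXU (tnth_nth 0). Qed.

Lemma in_var_val (R : comNzRingType) k (j : 'I_k) (i : nat) : i = j -> in_var R k i = 'X_j.
Proof. by move=> ->; rewrite /in_var valK. Qed.

Section Main.
Variables (R : comNzRingType) (n : nat) (phi : cnf n).
Let m := size phi.
Let N := (n + (m + n))%N.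

Definition fpoly : {mpoly R[n + N]} := feval (in_var R (n + N)) (ftop phi).

Lemma subst_fpoly e : subst_bool e fpoly =
  Top phi (fun j => ((ebool e j)%:R : {mpoly R[N]})) (in_var R N) (fun k => in_var R N (n + k)).
Proof.
rewrite /subst_bool /fpoly feval_morph feval_ftop; apply: Top_ext => [j|j|k] /=.
- have Hi : (j < n + N)%N by have := ltn_ord j; lia.
  rewrite (in_var_mPo _ Hi) tnth_mktuple; case: splitP => [j' /= Ej'|j' /= Ej']; last by have := ltn_ord j; lia.
  by rewrite ebool_ord; congr (_%:R); congr (e _); apply: val_inj.
- have Hi : (n + j < n + N)%N by have := ltn_ord j; rewrite /N; lia.
  rewrite (in_var_mPo _ Hi) tnth_mktuple; case: splitP => [j' /= Ej'|j' /= Ej']; first by have := ltn_ord j'; lia.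
  by rewrite (@in_var_val _ _ j') //; lia.
- have Hi : (n + n + k < n + N)%N by have := ltn_ord k; rewrite /N; lia.
  rewrite (in_var_mPo _ Hi) tnth_mktuple; case: splitP => [j' /= Ej'|j' /= Ej']; first by have := ltn_ord j'; lia.
  by rewrite (@in_var_val _ _ j') //; lia.
Qed.

Definition Cn : {mpoly R[n + (m + n)]} :=
  \sum_(e : {ffun 'I_n -> bool}) subst_bool e fpoly.

Definition Gc (i : 'I_(m + n)) : {mpoly R[n]} :=
  match split i with
  | inl k => \sum_(e : {ffun 'I_n -> bool})
               Hk phi (fun j => ((ebool e j)%:R : {mpoly R[n]})) (in_var R n) k
  | inr _ => 0
  end.

Lemma split_lshift a b (i : 'I_a) : split (lshift b i) = inl i.
Proof. exact: (unsplitK (inl i)). Qed.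
Lemma split_rshift a b (i : 'I_b) : split (rshift a i) = inr i.
Proof. exact: (unsplitK (inr i)). Qed.

Lemma cert1 : Cn = \sum_(i < m + n) 'X_(rshift n i) * x_embed (m + n) (Gc i).
Proof.
rewrite /Cn; under eq_bigr => e _ do rewrite subst_fpoly.
rewrite /Top exchange_big big_split_ord /=.
rewrite [X in _ = _ + X]big1 ?addr0; last first.
  by move=> j _; rewrite /Gc split_rshift /x_embed comp_mpoly0 mulr0.
apply: eq_bigr => k _; rewrite /Gc split_lshift -mulr_sumr; congr (_ * _).
  by apply: in_var_val.
rewrite /x_embed raddf_sum; apply: eq_bigr => e _.
symmetry; etransitivity; first exact: (Hk_morph phi (comp_mpoly [tuple 'X_(lshift (m + n) j) | j < n]) _ _ k).
apply: Hk_ext => j /=.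
  by rewrite rmorph_nat.
rewrite (in_var_mPo _ (ltn_ord j)) tnth_mktuple; symmetry; apply: in_var_val => //.
Qed.

Hypothesis Hunsat : unsat phi.

Lemma cert2 : y_subst (@cnf_system R n phi) Cn = 1.
Proof.
rewrite -(sum_Top R Hunsat) /Cn /y_subst raddf_sum; apply: eq_bigr => e _.
rewrite subst_fpoly.
set t2 := [tuple _ | i < _].
etransitivity; first exact: (Top_morph phi (comp_mpoly t2) _ _ _).
apply: Top_ext => [j|j|k] /=.
- by rewrite rmorph_nat.
- have Hi : (j < n + (m + n))%N by have := ltn_ord j; lia.
  rewrite (in_var_mPo _ Hi) tnth_mktuple; case: splitP => [j' /= Ej'|j' /= Ej']; last by have := ltn_ord j; lia.
  by symmetry; apply: in_var_val.
- have Hi : (n + k < n + (m + n))%N by have := ltn_ord k; lia.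
  rewrite (in_var_mPo _ Hi) tnth_mktuple; case: splitP => [j' /= Ej'|j' /= Ej']; first by have := ltn_ord j'; lia.
  rewrite /cnf_system; case: splitP => [k' /= Ek'|k' /= Ek']; last by have := ltn_ord k; lia.
  rewrite /cl; congr (clause_poly R (nth set0 phi _)); lia.
Qed.

End Main.


End RS2.

Theorem lemma3p2 (R : comNzRingType) (phi : forall n : nat, cnf n)
  (Hsize : poly_bounded (fun n => size (phi n)))
  (Hunsat : forall n, unsat (phi n)) :
  exists C : forall n, {mpoly R[n + (size (phi n) + n)]},
    (forall n, @hilbert_like_cert R n (phi n) (C n)) /\
    @VNP0 R (fun n => (n + (size (phi n) + n))%N) C.
Proof.
exists (fun n => Cn R (phi n)); split.
  move=> n; split; first by exists (@Gc R n (phi n)); exact: cert1.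
  exact: cert2 (Hunsat n).
have Hm1 : poly_bounded (fun n => (size (phi n)).+1).
  by apply: (pb_le (h := fun n => size (phi n) + 1)) => [n|]; [lia | apply: pb_add Hsize (pb_const 1)].
have Hfs : poly_bounded (fun n => (size (phi n)).+1 * (size (phi n)).+1 * (40 * n + 40)).
  apply: pb_mul; first exact: pb_mul.
  apply: (pb_le (h := fun n => 40 * (n + 1))) => [n|]; first lia.
  by apply: pb_mul; [exact: pb_const | apply: pb_add pb_id (pb_const 1)].
exists (fun n => n), (fun n => fpoly R (phi n)); split.
- exact: pb_id.
- split.
  + apply: pb_add pb_id _; apply: pb_add pb_id _; exact: pb_add Hsize pb_id.
  + apply: (pb_le (h := fun n => 2 * ((size (phi n)).+1 * (size (phi n)).+1 * (40 * n + 40)))).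
      move=> n; apply: leq_trans (msize_feval _ _ _) _; rewrite leq_mul2l; exact: fsize_ftop.
    by apply: pb_mul Hfs; exact: pb_const.
  + exists (fun n => compile 0 (ftop (phi n))); split.
      apply: (pb_le _ Hfs) => n; rewrite size_compile; exact: fsize_ftop.
    by move=> n; rewrite compile_out.
- by move=> n.
Qed.
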